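(* There exists a two-way optical interference automaton (2OIA) that recognizes the language $L_{eq}=\{a^nb^n\mid n\in\mathbb{N}\}$ in time linear in the length of the input.
   Context: A two-way optical interference automaton (2OIA) is a deterministic machine with finite state set $Q$, start state $q_0$, accepting and rejecting states, finite input alphabet $\Sigma$, and tape alphabet $\Gamma=\Sigma\cup\{\text{¢},\$\}$. On input $w=w_1\cdots w_n$ the read-only tape holds ¢$w_1\cdots w_n\$$ in cells $0,1,\dots,n+1$, scanned by a two-way head. For each cell $m$ there is a monochromatic point light source at the point $(m,0)$ of the plane; all sources have the same wavelength $\lambda$ and the same initial amplitude $A_0$, and each source is at any moment either switched off or switched on with initial phase $0$ or $\pi$. A detector is located at a grid point $(j,k)$ with $j,k\in\{0,\tfrac12,1,\tfrac32,\dots,n+1\}$, pointing towards the source array; its field of vision is the cone making angle $\pi/4$ with the vertical line through it, so it sees exactly the sources at $(m,0)$ with $|m-j|\le k$. The resultant wave at the detector is $\sum A_0 r_m^{-1}e^{i(\phi_m+2\pi r_m/\lambda)}$, summed over the switched-on sources it sees, where $r_m$ is the distance from the source to the detector and $\phi_m\in\{0,\pi\}$ the source's phase; the detector outputs $\underline{1}$ if this resultant is nonzero and $\underline{0}$ otherwise. The transition function $\delta:Q\times\Gamma\times\{\underline0,\underline1\}\to Q\times\{\text{left},\text{right},\text{stay}\}\times\{\text{left},\text{right},\text{up},\text{down},\text{stay}\}\times\{\mathrm{toggle}(0),\mathrm{toggle}(\pi),-\}$ maps (state, scanned symbol, detector output) to a new state, a move of the head by one cell, a move of the detector by one grid step (of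 length $1/2$), and an action on the source of the currently scanned cell: $\mathrm{toggle}(\phi)$ switches it on with phase $\phi$ if it is off and switches it off if it is on; $-$ does nothing. Initially all sources are off, the machine is in $q_0$, the head is on cell $0$, and the detector is at a prescribed initial grid position. For a given source, a maximal sequence of toggles at consecutive time steps is called non-transient if its length is odd; there is a constant $k$ such that the machine crashes if it attempts a non-transient toggle sequence on a single source for the $(k+1)$-th time. The machine accepts when it is in an accepting state with detector output $\underline0$. Its running time is the total number of moves made by the head plus the number of moves made by the detector. A 2OIA recognizes a language $L$ if it accepts every input in $L$ and rejects every input not in $L$. *)

(* Defs.v *)
From Stdlib Require Import Reals.
From mathcomp Require Import all_boot.

Set Implicit Arguments.
Unset Strict Implicit.
Unset Printing Implicit Defensive.

Inductive tsym (Sigma : Type) : Type :=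
  | LEnd
  | REnd
  | Inp of Sigma.
Arguments LEnd {Sigma}.
Arguments REnd {Sigma}.

Inductive hmove : Type := HLeft | HRight | HStay.
Inductive dmove : Type := DLeft | DRight | DUp | DDown | DStay.
Inductive phase : Type := Ph0 | PhPi.
Inductive action : Type := Toggle of phase | NoAct.
Inductive src : Type := Off | On of phase.

(** The detector position is
    stored in doubled coordinates: grid point (j,k) = (J/2, K/2), so a
    grid step of length 1/2 changes J or K by 1.  [det0] is the
    prescribed initial detector position (doubled coordinates),
    [kcr] the crash constant k. *)
Record OIA (Sigma : Type) := MkOIA {
  Q : finType;
  q0 : Q;
  qacc : pred Q;
  qrej : pred Q;
  acc_rej_disj : forall q, ~~ (qacc q && qrej q);
  delta : Q -> tsym Sigma -> bool -> Q * hmove * dmove * action;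
  kcr : nat;
  det0 : nat * nat
}.

Arguments Q {Sigma} o.
Arguments q0 {Sigma} o.
Arguments qacc {Sigma} o _.
Arguments qrej {Sigma} o _.
Arguments delta {Sigma} o _ _ _.
Arguments kcr {Sigma} o.
Arguments det0 {Sigma} o.

(** Configurations. [crun = Some (m, l)]: source m was toggled at each
    of the last l consecutive time steps (the current maximal toggle
    sequence); [ccnt m] = number of completed non-transient (odd length)
    toggle sequences on source m; [ctime] = running time so far
    (head moves + detector moves). *)
Record config (Q : Type) := Cfg {
  cst : Q;
  chead : nat;
  cJ : nat;
  cK : nat;
  csrc : nat -> src;
  crun : option (nat * nat);
  ccnt : nat -> nat;
  ctime : nat
}.

Section Physics.
Local Open Scope R_scope.
Definition phase_val (p : phase) : R := match p with Ph0 => 0 | PhPi => PI end.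

(** the detector at (J/2, K/2) sees the source at (m, 0) iff |m - J/2| <= K/2 *)
Definition visible (J K m : nat) : bool := ((J <= 2 * m + K) && (2 * m <= J + K))%N.

Definition dist (J K m : nat) : R :=
  sqrt ((INR m - INR J / 2) ^ 2 + (INR K / 2) ^ 2).

(** real and imaginary parts of A0 r^-1 e^{i(phi + 2 pi r / lambda)} *)
Definition re_term (lam A0 : R) (J K : nat) (s : nat -> src) (m : nat) : R :=
  if visible J K m then
    match s m with
    | Off => 0
    | On p => (A0 / dist J K m * cos (phase_val p + 2 * PI * dist J K m / lam))
    end
  else 0.

Definition im_term (lam A0 : R) (J K : nat) (s : nat -> src) (m : nat) : R :=
  if visible J K m then
    match s m with
    | Off => 0
    | On p => (A0 / dist J K m * sin (phase_val p + 2 * PI * dist J K m / lam))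
    end
  else 0.

Definition res_re lam A0 (n J K : nat) s : R :=
  foldr Rplus 0 [seq re_term lam A0 J K s m | m <- iota 0 n.+2].
Definition res_im lam A0 (n J K : nat) s : R :=
  foldr Rplus 0 [seq im_term lam A0 J K s m | m <- iota 0 n.+2].

End Physics.

(** Convention for the degenerate height k = 0 (the detector
    sits on the source array and can only see the source directly below
    it, at distance 0): output 1 iff that source is switched on. *)
Definition detect lam A0 (n J K : nat) (s : nat -> src) : bool :=
  if K == 0 then
    (~~ odd J) && (if s J./2 is On _ then true else false)
  else
    if Req_EM_T (res_re lam A0 n J K s) R0 then
      (if Req_EM_T (res_im lam A0 n J K s) R0 then false else true)
    else true.

Fixpoint nth_opt (T : Type) (w : seq T) (i : nat) : option T :=
  match w, i with
  | [::], _ => None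
  | x :: _, 0 => Some x
  | _ :: w', i'.+1 => nth_opt w' i'
  end.

(** tape content: cell 0 = ¢, cells 1..n = w, cell n+1 = $ *)
Definition tape (Sigma : Type) (w : seq Sigma) (i : nat) : tsym Sigma :=
  if i is i'.+1 then (if nth_opt w i' is Some x then Inp x else REnd) else LEnd.

Definition toggle (p : phase) (s : src) : src :=
  match s with Off => On p | On _ => Off end.

Definition close_run (run : option (nat * nat)) (cnt : nat -> nat) : nat -> nat :=
  match run with
  | Some (m, l) => if odd l then (fun x => if x == m then (cnt x).+1 else cnt x) else cnt
  | None => cnt
  end.

Section Sem.
Variables (Sigma : Type) (M : OIA Sigma) (lam A0 : R) (w : seq Sigma).
Let n := size w.

Definition halted (c : config (Q M)) : bool := qacc M (cst c) || qrej M (cst c).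

Definition output (c : config (Q M)) : bool := detect lam A0 n (cJ c) (cK c) (csrc c).

(** one step; [None] = crash (toggle limit exceeded, or a move leaving
    the tape / the detector grid).  Halted configurations are fixed. *)
Definition step (c : config (Q M)) : option (config (Q M)) :=
  if halted c then Some c else
  let h := chead c in
  match delta M (cst c) (tape w h) (output c) with
  | (q', hm, dm, act) =>
    let src' := match act with
                | NoAct => csrc c
                | Toggle p => fun m => if m == h then toggle p (csrc c m) else csrc c m
                end in
    let rc := match act with
              | Toggle _ =>
                  match crun c with
                  | Some (m, l) => if m == h then (Some (h, l.+1), ccnt c)
                                   else (Some (h, 1), close_run (crun c) (ccnt c))
                  | None => (Some (h, 1), ccnt c)
                  end
              | NoAct => (None, close_run (crun c) (ccnt c))
              end in
    let crash := match crun c with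
                 | Some (m, _) => kcr M < rc.2 m
                 | None => false
                 end in
    let nh := match hm with
              | HLeft => if h is h'.+1 then Some h' else None
              | HRight => if h < n.+1 then Some h.+1 else None
              | HStay => Some h
              end in
    let nJ := match dm with
              | DLeft => if cJ c is J'.+1 then Some J' else None
              | DRight => if cJ c < (n.+1).*2 then Some (cJ c).+1 else None
              | _ => Some (cJ c)
              end in
    let nK := match dm with
              | DDown => if cK c is K'.+1 then Some K' else None
              | DUp => if cK c < (n.+1).*2 then Some (cK c).+1 else None
              | _ => Some (cK c)
              end in
    let dt := (if hm is HStay then 0 else 1) + (if dm is DStay then 0 else 1) in
    if crash then None else
    match nh, nJ, nK with
    | Some h2, Some J2, Some K2 =>
        Some (Cfg q' h2 J2 K2 src' rc.1 rc.2 (ctime c + dt))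
    | _, _, _ => None
    end
  end.

Definition init : option (config (Q M)) :=
  if (det0 M).1 <= (n.+1).*2 then
    if (det0 M).2 <= (n.+1).*2 then
      Some (Cfg (q0 M) 0 (det0 M).1 (det0 M).2 (fun _ => Off) None (fun _ => 0) 0)
    else None
  else None.

Definition exec (t : nat) : option (config (Q M)) :=
  iter t (fun oc => if oc is Some c then step c else None) init.

Definition accepting (c : config (Q M)) : bool := qacc M (cst c) && ~~ output c.

End Sem.

Inductive letter : Type := La | Lb.
Definition Leq (w : seq letter) : Prop := exists n, w = nseq n La ++ nseq n Lb.

Arguments halted {Sigma} M c.
Arguments output {Sigma} M lam A0 w c.
Arguments step {Sigma} M lam A0 w c.
Arguments init {Sigma} M w.
Arguments exec {Sigma} M lam A0 w t.
Arguments accepting {Sigma} M lam A0 w c.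

(* Main.v *)
Require Import Defs.
From Stdlib Require Import Reals Lia.
From HB Require Import structures.
From mathcomp Require Import all_boot zify.
Set Implicit Arguments.

Definition l2b (x : letter) : bool := if x is La then true else false.
Definition b2l (b : bool) : letter := if b then La else Lb.
Lemma l2bK : cancel l2b b2l. Proof. by case. Qed.
HB.instance Definition _ := Equality.copy letter (can_type l2bK).

Inductive St := S0 | S1 | QA | QB | Acc | Rej.
Definition st2o (s : St) : 'I_6 := inord (match s with S0 => 0 | S1 => 1 | QA => 2 | QB => 3 | Acc => 4 | Rej => 5 end).
Definition o2st (i : 'I_6) : St := match val i with 0 => S0 | 1 => S1 | 2 => QA | 3 => QB | 4 => Acc | _ => Rej end.
Lemma st2oK : cancel st2o o2st. Proof. by case; rewrite /o2st /st2o /= inordK. Qed.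
HB.instance Definition _ := Finite.copy St (can_type st2oK).

Definition dlt (q : St) (s : tsym letter) (o : bool) : St * hmove * dmove * action :=
  match q, s with
  | S0, _ => (S1, HStay, DStay, Toggle Ph0)
  | S1, _ => (QA, HRight, DStay, NoAct)
  | QA, Inp La => (QA, HRight, DRight, NoAct)
  | QA, LEnd => (Rej, HStay, DStay, NoAct)
  | QA, _ => (QB, HStay, DStay, NoAct)
  | QB, Inp Lb => if o then (Rej, HStay, DStay, NoAct) else (QB, HRight, DLeft, NoAct)
  | QB, REnd => if o then (Acc, HStay, DRight, NoAct) else (Rej, HStay, DStay, NoAct)
  | _, _ => (Rej, HStay, DStay, NoAct)
  end.

Definition isacc (q : St) := if q is Acc then true else false.
Definition isrej (q : St) := if q is Rej then true else false.
Lemma disj q : ~~ (isacc q && isrej q). Proof. by case: q. Qed.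

Definition Mach : OIA letter := @MkOIA letter St S0 isacc isrej disj dlt 1 (0,0).

Definition src1 : nat -> src := fun m => if m == 0 then On Ph0 else Off.

Lemma exec2 lam A0 w : exists cnt, exec Mach lam A0 w 2 = Some (Cfg (QA : Q Mach) 1 0 0 src1 None cnt 1).
Proof.
eexists. rewrite /exec /=. reflexivity.
Qed.

Lemma detE lam A0 n J : detect lam A0 n J 0 src1 = (J == 0).
Proof.
rewrite /detect /=; case: J => [|[|J]] //=.
by rewrite /src1; case: (odd J).
Qed.

Lemma nth_optE (T : Type) (x0 : T) (w : seq T) i :
  nth_opt w i = if i < size w then Some (nth x0 w i) else None.
Proof. by elim: w i => [|x w IH] [|i] //=; rewrite IH. Qed.

Lemma tapeE (w : seq letter) p :
  tape w p.+1 = if p < size w then Inp (nth La w p) else REnd.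
Proof. by rewrite /tape (nth_optE La); case: ifP. Qed.

Lemma eq_nseq (T : eqType) (s : seq T) x :
  (forall k, k < size s -> nth x s k = x) -> s = nseq (size s) x.
Proof.
move=> H; apply: (@eq_from_nth _ x); first by rewrite size_nseq.
by move=> k Hk; rewrite nth_nseq Hk H.
Qed.

Lemma LeqE (w : seq letter) i j :
  i = find (fun y => y != La) w ->
  j = find (fun y => y != Lb) (drop i w) ->
  Leq w <-> (i = j /\ size w = i + j).
Proof.
move=> Ei Ej; split.
- case=> m Hw.
  have Hi : i = m.
    rewrite Ei Hw find_cat has_nseq /= andbF size_nseq.
    by case: m {Hw Ei Ej} => [|m] //=; rewrite addn0.
  have Hd : drop i w = nseq m Lb by rewrite Hi Hw drop_size_cat ?size_nseq.
  have Hj : j = m.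
    rewrite Ej Hd hasNfind ?size_nseq // has_nseq andbF //.
  by rewrite Hi Hj Hw size_cat !size_nseq.
- move=> [Hij Hs]; exists i.
  have Hiw : i <= size w by rewrite Ei; apply: find_size.
  rewrite -(cat_take_drop i w); congr (_ ++ _).
  + rewrite [take i w](@eq_nseq _ _ La); first by rewrite size_take_min (minn_idPl Hiw).
    move=> k; rewrite size_take_min => Hk; rewrite nth_take; last by lia.
    have := @before_find _ La (fun y => y != La) w k; rewrite -Ei.
    by move=> /(_ ltac:(lia)) /negbFE /eqP.
  + rewrite [drop i w](@eq_nseq _ _ Lb); first by rewrite size_drop Hs -Hij addKn.
    move=> k; rewrite size_drop Hs -Hij addKn => Hk.
    have := @before_find _ Lb (fun y => y != Lb) (drop i w) k; rewrite -Ej -Hij.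
    by move=> /(_ Hk) /negbFE /eqP.
Qed.

Section Run.
Variables (lam A0 : R) (w : seq letter).
Notation n := (size w).
Notation ex := (exec Mach lam A0 w).
Notation cf q h J cnt tm := (Cfg (q : Q Mach) h J 0 src1 None cnt tm).

Lemma exS t : ex t.+1 = (if ex t is Some c then step Mach lam A0 w c else None).
Proof. by []. Qed.

Lemma step_RR (q q' : St) h J cnt tm :
  isacc q = false -> isrej q = false ->
  dlt q (tape w h) (J == 0) = (q', HRight, DRight, NoAct) ->
  h < n.+1 -> J < n.+1.*2 ->
  step Mach lam A0 w (cf q h J cnt tm) = Some (cf q' h.+1 J.+1 cnt (tm + 2)).
Proof.
move=> Ha Hr Hd Hh HJ.
by rewrite /step /halted /output /= Ha Hr detE Hd /= Hh HJ.
Qed.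

Lemma step_RL (q q' : St) h J cnt tm :
  isacc q = false -> isrej q = false ->
  dlt q (tape w h) (J.+1 == 0) = (q', HRight, DLeft, NoAct) ->
  h < n.+1 ->
  step Mach lam A0 w (cf q h J.+1 cnt tm) = Some (cf q' h.+1 J cnt (tm + 2)).
Proof.
move=> Ha Hr Hd Hh.
by rewrite /step /halted /output /= Ha Hr detE Hd /= Hh.
Qed.

Lemma step_SS (q q' : St) h J cnt tm :
  isacc q = false -> isrej q = false ->
  dlt q (tape w h) (J == 0) = (q', HStay, DStay, NoAct) ->
  step Mach lam A0 w (cf q h J cnt tm) = Some (cf q' h J cnt (tm + 0)).
Proof.
move=> Ha Hr Hd.
by rewrite /step /halted /output /= Ha Hr detE Hd /=.
Qed.

Lemma step_SR (q q' : St) h J cnt tm :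
  isacc q = false -> isrej q = false ->
  dlt q (tape w h) (J == 0) = (q', HStay, DRight, NoAct) ->
  J < n.+1.*2 ->
  step Mach lam A0 w (cf q h J cnt tm) = Some (cf q' h J.+1 cnt (tm + 1)).
Proof.
move=> Ha Hr Hd HJ.
by rewrite /step /halted /output /= Ha Hr detE Hd /= HJ.
Qed.


Variables (i j : nat) (cnt : nat -> nat).
Hypothesis Ei : i = find (fun y => y != La) w.
Hypothesis Ej : j = find (fun y => y != Lb) (drop i w).
Hypothesis H2 : ex 2 = Some (cf QA 1 0 cnt 1).

Lemma i_le : i <= n. Proof. by rewrite Ei; apply: find_size. Qed.
Lemma ij_le : i + j <= n.
Proof.
have : j <= size (drop i w) by rewrite Ej; apply: find_size.
rewrite size_drop; have := i_le; lia.
Qed.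

Lemma phaseA k : k <= i -> ex (2 + k) = Some (cf QA k.+1 k cnt (1 + 2 * k)).
Proof.
elim: k => [|k IH] Hk; first by rewrite addn0.
have Hki : k < i by [].
have Hkn : k < n by have := i_le; lia.
rewrite addnS exS IH ?(ltnW Hk) //.
have Hnth : nth La w k = La.
  have := @before_find _ La (fun y => y != La) w k; rewrite -Ei.
  by move=> /(_ Hki) /negbFE /eqP.
have Ht : tape w k.+1 = Inp La by rewrite tapeE Hkn Hnth.
rewrite (@step_RR QA QA k.+1 k cnt _ erefl erefl _ ltac:(lia) ltac:(lia)); last by rewrite Ht.
congr (Some (Cfg _ _ _ _ _ _ _ _)); lia.
Qed.

Lemma stepAB : ex (3 + i) = Some (cf QB i.+1 i cnt (1 + 2 * i)).
Proof.
have -> : 3 + i = (2 + i).+1 by lia.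
rewrite exS phaseA //.
rewrite (@step_SS QA QB) //; first by rewrite addn0.
rewrite tapeE; case: ifP => // Hin.
have : has (fun y => y != La) w by rewrite has_find -Ei.
move=> /(nth_find La); rewrite -Ei; by case: (nth La w i).
Qed.

Lemma phaseB k : k <= j -> k <= i ->
  ex (3 + i + k) = Some (cf QB (i + k).+1 (i - k) cnt (1 + 2 * i + 2 * k)).
Proof.
elim: k => [|k IH] Hkj Hki; first by rewrite !addn0 subn0 stepAB.
have Hkj' : k < j by [].
have Hkn : i + k < n by have := ij_le; lia.
rewrite addnS exS IH ?(ltnW Hkj) ?(ltnW Hki) //.
have Hnth : nth La w (i + k) = Lb.
  have := @before_find _ La (fun y => y != Lb) (drop i w) k; rewrite -Ej nth_drop.
  by move=> /(_ Hkj') /negbFE /eqP.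
have E : i - k = (i - k.+1).+1 by lia.
have Ht : tape w (i + k).+1 = Inp Lb by rewrite tapeE Hkn Hnth.
rewrite E (@step_RL QB QB (i + k).+1 (i - k.+1) cnt _ erefl erefl _ ltac:(lia)); last by rewrite Ht.
rewrite addnS; congr (Some (Cfg _ _ _ _ _ _ _ _)); lia.
Qed.

Lemma final : exists t (c : config (Q Mach)),
  ex t = Some c /\ halted Mach c /\ ctime c <= 3 * n + 3 /\
  (accepting Mach lam A0 w c <-> (i = j /\ n = i + j)).
Proof.
have Hij := ij_le.
case: (ltnP i j) => Hlt.
- have HB := @phaseB i (ltnW Hlt) (leqnn i).
  have Hkn : i + i < n by lia.
  have Hnth : nth La w (i + i) = Lb.
    have := @before_find _ La (fun y => y != Lb) (drop i w) i; rewrite -Ej nth_drop.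
    by move=> /(_ Hlt) /negbFE /eqP.
  exists (3 + i + i).+1, (cf Rej (i + i).+1 (i - i) cnt (1 + 2 * i + 2 * i + 0)).
  split; first by rewrite exS HB (@step_SS QB Rej) // tapeE Hkn Hnth subnn.
  split; first by [].
  split; first by rewrite /=; lia.
  split; first by []. lia.
- have HB := @phaseB j (leqnn j) Hlt.
  case: (ltnP (i + j) n) => Hkn.
  + have Hnth : nth La w (i + j) = La.
      have : has (fun y => y != Lb) (drop i w) by rewrite has_find -Ej size_drop ltn_subRL.
      move=> /(nth_find La); rewrite -Ej nth_drop; by case: (nth La w (i + j)).
    exists (3 + i + j).+1, (cf Rej (i + j).+1 (i - j) cnt (1 + 2 * i + 2 * j + 0)).
    split; first by rewrite exS HB (@step_SS QB Rej) // tapeE Hkn Hnth.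
    split; first by [].
    split; first by rewrite /=; lia.
    split; first by []. lia.
  + have Hsz : i + j = n by lia.
    have Ht : tape w (i + j).+1 = REnd by rewrite tapeE ltnNge Hkn.
    case: (eqVneq (i - j) 0) => Hz.
    * exists (3 + i + j).+1, (cf Acc (i + j).+1 (i - j).+1 cnt (1 + 2 * i + 2 * j + 1)).
      split.
        rewrite exS HB (@step_SR QB Acc) //; first by rewrite Ht Hz.
        lia.
      split; first by [].
      split; first by rewrite /=; lia.
      split => _; first by split; lia.
      by rewrite /accepting /output /= detE.
    * exists (3 + i + j).+1, (cf Rej (i + j).+1 (i - j) cnt (1 + 2 * i + 2 * j + 0)).
      split; first by rewrite exS HB (@step_SS QB Rej) // Ht (negbTE Hz).
      split; first by [].
      split; first by rewrite /=; lia.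
      split; first by []. lia.
Qed.

End Run.

Theorem corollary1 :
  forall lam A0 : R, Rlt R0 lam -> Rlt R0 A0 ->
  exists (M : OIA letter) (C : nat),
    forall w : seq letter,
      exists (t : nat) (c : config (Q M)),
        exec M lam A0 w t = Some c /\
        halted M c /\
        ctime c <= C * size w + C /\
        (accepting M lam A0 w c <-> Leq w).
Proof.
move=> lam A0 _ _; exists Mach, 3 => w.
have [cnt H2] := exec2 lam A0 w.
have [t [c [H1 [H3 [H4 H5]]]]] :=
  @final lam A0 w _ _ cnt erefl erefl H2.
exists t, c; do 3! (split => //).
rewrite H5; symmetry; exact: LeqE.
Qed.
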